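(* Let $p\geq 5$ be a prime and let $r$ be an integer with $1\leq r\leq p-1$ that is a quadratic nonresidue modulo $p$. Then for all $n\geq 0$, $d_{p-1}(pn+r)\equiv 0\pmod p$.
   Context: For each integer $k\geq 1$, the numbers $d_k(n)$ are defined by $\sum_{n\geq 0} d_k(n)q^n = \frac{f_2^k}{f_1^{3k+1}}$, where $f_r = \prod_{i\geq 1}(1-q^{ri})$. *)

(* Defs.v *)
From mathcomp Require Import all_boot all_order all_algebra.
Set Implicit Arguments. Unset Strict Implicit. Unset Printing Implicit Defensive.
Import GRing.Theory Num.Theory.
Local Open Scope ring_scope.

(* Truncations (modulo q^(N+1)) of the q-series involved; all coefficients of
   index <= N are exact. *)

Definition fr (r N : nat) : {poly int} :=
  \prod_(1 <= i < N.+1) (1 - 'X^(r * i)).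

(* 1/f_1 = prod_{i>=1} 1/(1 - q^i) = prod_{i>=1} sum_{j>=0} q^(i j),
   with i <= N and j <= N (exact modulo q^(N+1)). *)
Definition f1inv (N : nat) : {poly int} :=
  \prod_(1 <= i < N.+1) \sum_(j < N.+1) 'X^(i * j).

(* d_k(n) = [q^n] f_2^k / f_1^(3k+1). *)
Definition d (k n : nat) : int :=
  ((fr 2 n) ^+ k * (f1inv n) ^+ (3 * k + 1))`_n.

Definition qnr (p r : nat) : Prop :=
  ~ (exists x : nat, (x ^ 2 = r %[mod p])%N).

(* Main.v *)
Require Import Defs.
From mathcomp Require Import all_boot all_order all_algebra.
From mathcomp Require Import ring zify.
Set Implicit Arguments. Unset Strict Implicit. Unset Printing Implicit Defensive.
Import GRing.Theory Num.Theory.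

Module Aux.
Local Open Scope ring_scope.


Section Eqm.
Variable R : comNzRingType.
Implicit Types a b c e : {poly R}.

Definition eqm (N : nat) a b := forall i, (i <= N)%N -> a`_i = b`_i.

Lemma eqm_refl N a : eqm N a a. Proof. by []. Qed.
Lemma eqm_sym N a b : eqm N a b -> eqm N b a.
Proof. by move=> h i hi; rewrite h. Qed.
Lemma eqm_trans N a b c : eqm N a b -> eqm N b c -> eqm N a c.
Proof. by move=> h1 h2 i hi; rewrite h1 ?h2. Qed.
Lemma eqmD N a b c e : eqm N a b -> eqm N c e -> eqm N (a + c) (b + e).
Proof. by move=> h1 h2 i hi; rewrite !coefD h1 ?h2. Qed.
Lemma eqmN N a b : eqm N a b -> eqm N (- a) (- b).
Proof. by move=> h1 i hi; rewrite !coefN h1. Qed.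
Lemma eqmM N a b c e : eqm N a b -> eqm N c e -> eqm N (a * c) (b * e).
Proof.
move=> h1 h2 i hi; rewrite !coefM; apply: eq_bigr => j _.
rewrite h1 ?h2 //; last by apply: leq_trans hi; rewrite -ltnS.
by apply: leq_trans (leq_subr _ _) hi.
Qed.
Lemma eqmX N a b k : eqm N a b -> eqm N (a ^+ k) (b ^+ k).
Proof.
move=> h; elim: k => [|k ih]; first exact: eqm_refl.
by rewrite !exprS; apply: eqmM.
Qed.
Lemma eqm_sum N (I : Type) (r : seq I) (P : pred I) (F G : I -> {poly R}) :
  (forall i, P i -> eqm N (F i) (G i)) ->
  eqm N (\sum_(i <- r | P i) F i) (\sum_(i <- r | P i) G i).
Proof.
move=> h; apply: (big_ind2 (eqm N)) => //.
by move=> *; apply: eqmD.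
Qed.
Lemma eqm_prod N (I : Type) (r : seq I) (P : pred I) (F G : I -> {poly R}) :
  (forall i, P i -> eqm N (F i) (G i)) ->
  eqm N (\prod_(i <- r | P i) F i) (\prod_(i <- r | P i) G i).
Proof.
move=> h; apply: (big_ind2 (eqm N)) => //.
by move=> *; apply: eqmM.
Qed.
Lemma eqm_Xn0 N k a : (N < k)%N -> eqm N ('X^k * a) 0.
Proof.
move=> hk i hi; rewrite coefXnM coef0.
by have -> : (i < k)%N by apply: leq_ltn_trans hk.
Qed.
Lemma eqm_1Xn N k a : (N < k)%N -> eqm N (a * (1 - 'X^k)) a.
Proof.
move=> hk i hi; rewrite mulrBr mulr1 coefB mulrC (eqm_Xn0 a hk hi) coef0.
by rewrite subr0.
Qed.
End Eqm.


Section QB.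
Variable R : comNzRingType.
Variable Q : R.
Fixpoint qb (m k : nat) : R :=
  match m, k with
  | 0, 0 => 1
  | 0, _.+1 => 0
  | m'.+1, 0 => 1
  | m'.+1, k'.+1 => qb m' k' + Q ^+ k'.+1 * qb m' k'.+1
  end.

Lemma qb0 m : qb m 0 = 1. Proof. by case: m. Qed.
Lemma qb_gt m k : (m < k)%N -> qb m k = 0.
Proof.
elim: m k => [|m ih] [|k] //= h.
by rewrite !ih ?mulr0 ?addr0 // ltnW.
Qed.
Lemma qb_nn m : qb m m = 1.
Proof. by elim: m => //= m ->; rewrite qb_gt // mulr0 addr0. Qed.

Lemma qbinT m : forall w z : R,
  \prod_(i < m) (w + z * Q ^+ i) =
  \sum_(k < m.+1) Q ^+ 'C(k, 2) * qb m k * z ^+ k * w ^+ (m - k).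
Proof.
elim: m => [|m ih] w z.
  by rewrite big_ord0 big_ord1 /= !mulr1.
rewrite big_ord_recl expr0 mulr1.
have -> : \prod_(i < m) (w + z * Q ^+ (lift ord0 i)) =
          \prod_(i < m) (w + (z * Q) * Q ^+ i).
  by apply: eq_bigr => i _; rewrite /= /bump /= add1n exprS mulrA.
rewrite ih mulrDl !big_distrr /=.
rewrite [RHS]big_ord_recl /= ?qb0 !mulr1 subn0.
have E : forall k : 'I_m.+1, Q ^+ 'C((lift ord0 k), 2) * qb m.+1 (lift ord0 k) *
    z ^+ (lift ord0 k) * w ^+ (m.+1 - (lift ord0 k)) =
    z * (Q ^+ 'C(k, 2) * qb m k * (z * Q) ^+ k * w ^+ (m - k)) +
    Q ^+ 'C(k.+1, 2) * (Q ^+ k.+1 * qb m k.+1) * z ^+ k.+1 * w ^+ (m - k).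
  move=> k; rewrite /= /bump /= add1n subSS binS bin1 exprD exprMn exprS.
  rewrite !add0n [z ^+ k.+1]exprS; ring.
rewrite (eq_bigr _ (fun k _ => E k)) big_split /= addrCA [LHS]addrC; congr (_ + _).
rewrite big_ord_recl [X in _ = _ + X]big_ord_recr /= qb0 (qb_gt (ltnSn m)).
rewrite !(mulr0, mul0r, addr0, mulr1, expr0, subn0) -?exprS.
rewrite !mul1r -exprS; congr (_ + _).
apply: eq_bigr => k _; rewrite /= /bump /= add1n.
have hk : (k < m)%N := ltn_ord k.
rewrite exprMn -(subnSK hk) [w ^+ (_.+1)]exprS; ring.
Qed.

Definition qP (j : nat) : R := \prod_(i < j) (1 - Q ^+ i.+1).

Lemma qPS j : qP j.+1 = qP j * (1 - Q ^+ j.+1).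
Proof. by rewrite /qP big_ord_recr. Qed.

Lemma qb_fact m k : (k <= m)%N -> qb m k * qP k * qP (m - k) = qP m.
Proof.
elim: m k => [|m ih] [|k] //=.
- by move=> _; rewrite /qP !big_ord0 !mulr1.
- by move=> _; rewrite /qP big_ord0 !mul1r subn0.
rewrite ltnS => hk; rewrite subSS.
case: (ltngtP k m) hk => // [hkm _|-> _]; last first.
  by rewrite qb_nn qb_gt // mulr0 addr0 subnn /qP big_ord0 !mul1r mulr1.
have e1 := ih k (ltnW hkm).
have e2 := ih k.+1 hkm.
set j := (m - k.+1)%N in e2.
have hj : (m - k)%N = j.+1 by rewrite /j subnSK.
have hm : m.+1 = (k.+1 + j.+1)%N by rewrite -hj addSn subnKC // ltnW.
rewrite hj in e1 *.
transitivity ((qb m k * qP k * qP j.+1) * (1 - Q ^+ k.+1) +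
   Q ^+ k.+1 * (qb m k.+1 * qP k.+1 * qP j) * (1 - Q ^+ j.+1)).
  rewrite !qPS; ring.
rewrite e1 e2 qPS hm exprD; ring.
Qed.
End QB.


Notation P := {poly int}.

Lemma bin2_mul2 (k : nat) : ('C(k,2) * 2 = k * k.-1)%N.
Proof. elim: k => // k ih. rewrite binS bin1 mulnDl ih. case: k {ih}=> //= k. nia. Qed.

Lemma sum2i n : (\sum_(i < n) (2 * i) = n * n.-1)%N.
Proof.
elim: n => [|n ih]; first by rewrite big_ord0.
rewrite big_ord_recr /= ih; case: n {ih} => //= n; nia.
Qed.

Lemma fr_qP r N : fr r N = qP ('X^r : P) N.
Proof.
rewrite /fr /qP big_add1 /= big_mkord; apply: eq_bigr => i _.
by rewrite -exprM.
Qed.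

Lemma eqm_qP s N j : (0 < s)%N -> (N <= j)%N -> eqm N (qP ('X^s : P) j) (qP ('X^s) N).
Proof.
move=> hs; elim: j => [|j ih]; first by rewrite leqn0 => /eqP ->; exact: eqm_refl.
rewrite leq_eqVlt => /orP [/eqP -> | hj]; first exact: eqm_refl.
apply: eqm_trans (ih hj); rewrite qPS -exprM; apply: eqm_1Xn.
by apply: leq_trans hj _; rewrite -{1}(mul1n j.+1) leq_mul2r hs orbT.
Qed.

Definition Odd (n : nat) : P := \prod_(i < n) (1 - 'X^(2 * i + 1)).

Lemma qP_split n : qP ('X : P) (n + n) = Odd n * qP ('X^2) n.
Proof.
elim: n => [|n ih]; first by rewrite /Odd /qP !big_ord0 mulr1.
rewrite addSn addnS !qPS ih /Odd big_ord_recr /= -!exprM.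
have -> : (2 * n + 1 = (n + n).+1)%N by lia.
have -> : (2 * n.+1 = (n + n).+2)%N by lia.
ring.
Qed.


Definition ek (n k : nat) : nat := (((k - n) + (n - k)) ^ 2)%N.
Definition cst (n : nat) : nat := (n * n.-1 + (n + n).-1 * n)%N.

Lemma exp_id n k : (k <= n + n)%N ->
  ('C(k, 2) * 2 + (n + n).-1 * (n + n - k) = cst n + ek n k)%N.
Proof.
move=> hk; rewrite bin2_mul2 /cst /ek.
case: (leqP k n) => h.
- have [d ->] : exists d, n = (k + d)%N by exists (n - k)%N; lia.
  have -> : (k - (k + d) = 0)%N by lia.
  have -> : (k + d - k = d)%N by lia.
  have -> : (k + d + (k + d) - k = k + d + d)%N by lia.
  by case: k {hk h} => [|k]; case: d => [|d] /=; rewrite -?mulnn; ring.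
- have [d hd] : exists d, k = (n + d.+1)%N by exists (k - n.+1)%N; lia.
  subst k.
  have -> : (n - (n + d.+1) = 0)%N by lia.
  have -> : (n + d.+1 - n = d.+1)%N by lia.
  have [e he] : exists e, n = (d.+1 + e)%N by exists (n - d.+1)%N; lia.
  subst n.
  have -> : (d.+1 + e + (d.+1 + e) - (d.+1 + e + d.+1) = e)%N by lia.
  rewrite !addSn /= -?mulnn.
  ring.
Qed.

Lemma prod_lhs n : \prod_(i < n + n) ('X^((n+n).-1) + -1 * ('X^2)^+i) =
  'X^(cst n) * ((-1) ^+ n * Odd n ^+ 2) :> P.
Proof.
rewrite big_split_ord /=.
have L : \prod_(i < n) ('X^((n+n).-1) + -1 * ('X^2)^+(lshift n i)) =
    (-1) ^+ n * 'X^(n * n.-1) * Odd n :> P.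
  transitivity (\prod_(i < n) ((-1) * 'X^(2 * i) * (1 - 'X^(2 * (n.-1 - i) + 1))) : P).
    apply: eq_bigr => i _; rewrite /= -exprM; have hi := ltn_ord i.
    rewrite mulrBr mulr1 -mulrA -exprD.
    have -> : (2 * i + (2 * (n.-1 - i) + 1) = (n + n).-1)%N by rewrite -!subn1; lia.
    ring.
  rewrite !big_split /= prodr_const card_ord prodrXr sum2i; congr (_ * _).
  rewrite /Odd (reindex_inj rev_ord_inj) /=; apply: eq_bigr => i _.
  have hi := ltn_ord i.
  by have -> : (2 * (n.-1 - (n - i.+1)) + 1 = 2 * i + 1)%N by rewrite -!subn1; lia.
have U : \prod_(i < n) ('X^((n+n).-1) + -1 * ('X^2)^+(rshift n i)) =
    'X^((n + n).-1 * n) * Odd n :> P.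
  transitivity (\prod_(i < n) ('X^((n+n).-1) * (1 - 'X^(2 * i + 1))) : P).
    apply: eq_bigr => i _; rewrite /= -exprM mulrBr mulr1 -exprD; have hi := ltn_ord i.
    have -> : ((n + n).-1 + (2 * i + 1) = 2 * (n + i))%N by rewrite -!subn1; lia.
    ring.
  by rewrite big_split /= prodr_const card_ord -exprM.
rewrite L U /cst exprD; ring.
Qed.

Definition Sg n : P :=
  \sum_(k < (n + n).+1) (-1) ^+ k * 'X^(ek n k) * qb ('X^2) (n + n) k.

Lemma G1 n : Sg n = (-1) ^+ n * Odd n ^+ 2.
Proof.
apply: (@mulfI _ ('X^(cst n))); first by rewrite expf_neq0 // polyX_eq0.
rewrite -prod_lhs qbinT big_distrr /=; apply: eq_bigr => k _.
have hk : (k <= n + n)%N by rewrite -ltnS.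
rewrite -!exprM.
have E : 'X^(2 * 'C(k, 2)) * 'X^((n + n).-1 * (n + n - k)) = 'X^(cst n) * 'X^(ek n k) :> P.
  by rewrite -!exprD -exp_id // mulnC.
transitivity ('X^(cst n) * 'X^(ek n k) * ((-1) ^+ k * qb ('X^2) (n + n) k) : P).
  ring.
rewrite -E; ring.
Qed.


Definition Tn n : P := \sum_(k < (n + n).+1) (-1) ^+ k * 'X^(ek n k).

Lemma G2 N n : (N + N <= n)%N -> eqm N (Sg n * fr 2 N ^+ 2) (Tn n * fr 2 N).
Proof.
move=> hn; rewrite /Sg /Tn !big_distrl; apply: eqm_sum => k _ /=.
have hk : (k <= n + n)%N by rewrite -ltnS.
case: (ltnP N (ek n k)) => he.
  apply: (@eqm_trans _ _ _ 0).
    have -> : (-1) ^+ k * 'X^(ek n k) * qb 'X^2 (n + n) k * fr 2 N ^+ 2 =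
       'X^(ek n k) * ((-1) ^+ k * qb 'X^2 (n + n) k * fr 2 N ^+ 2) :> P by ring.
    exact: eqm_Xn0.
  apply: eqm_sym.
  have -> : (-1) ^+ k * 'X^(ek n k) * fr 2 N =
     'X^(ek n k) * ((-1) ^+ k * fr 2 N) :> P by ring.
  exact: eqm_Xn0.
have hd : ((k - n) + (n - k) <= N)%N.
  move: he; rewrite /ek; case: ((k - n) + (n - k))%N => // x.
  rewrite -mulnn => h; apply: leq_trans h; exact: leq_pmulr.
have hk1 : (N <= k)%N by lia.
have hk2 : (N <= n + n - k)%N by lia.
have key := qb_fact ('X^2 : P) hk.
have E : eqm N (qb 'X^2 (n + n) k * fr 2 N ^+ 2) (fr 2 N).
  rewrite [fr 2 N ^+ 2]expr2 fr_qP.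
  apply: (@eqm_trans _ _ _ (qb 'X^2 (n + n) k * qP 'X^2 k * qP 'X^2 (n + n - k))).
    rewrite mulrA; apply: eqmM; first apply: eqmM; first exact: eqm_refl.
      by apply: eqm_sym; apply: eqm_qP.
    by apply: eqm_sym; apply: eqm_qP.
  by rewrite key; apply: eqm_qP => //; lia.
rewrite -!mulrA; apply: eqmM; first exact: eqm_refl.
by apply: eqmM; first exact: eqm_refl.
Qed.

Definition theta N : P := (-1) ^+ (N + N).+1 * Tn (N + N).+1.

Lemma gauss N : eqm N (fr 1 N ^+ 2) (fr 2 N * theta N).
Proof.
set n := (N + N).+1.
have hn : (N + N <= n)%N by rewrite /n.
have h1 : eqm N (fr 1 N) (Odd n * fr 2 N).
  rewrite fr_qP.
  apply: (@eqm_trans _ _ _ (qP ('X^1 : P) (n + n))).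
    by apply: eqm_sym; apply: eqm_qP => //; lia.
  rewrite expr1 qP_split fr_qP; apply: eqmM; first exact: eqm_refl.
  by apply: eqm_qP => //; lia.
apply: (@eqm_trans _ _ _ ((Odd n * fr 2 N) ^+ 2)); first exact: eqmX.
have -> : (Odd n * fr 2 N) ^+ 2 = (-1) ^+ n * (Sg n * fr 2 N ^+ 2).
  rewrite G1 !mulrA -exprD addnn -mul2n exprM [(-1) ^+ 2]expr2 mulrNN mulr1 expr1n mul1r; ring.
rewrite /theta -/n.
have -> : fr 2 N * ((-1) ^+ n * Tn n) = (-1) ^+ n * (Tn n * fr 2 N) by ring.
by apply: eqmM; [exact: eqm_refl | exact: G2].
Qed.

Lemma theta_coef N j : (forall s, j <> (s ^ 2)%N) -> (theta N)`_j = 0.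
Proof.
rewrite /theta /Tn big_distrr coef_sum => hn.
apply: big1 => k _ /=.
have -> : (-1) ^+ (N + N).+1 * ((-1) ^+ k * 'X^(ek (N + N).+1 k)) =
   ((-1) ^+ ((N + N).+1 + k))%:P * 'X^(ek (N + N).+1 k) :> P.
  by rewrite polyC_exp polyCN polyC1 exprD mulrA.
rewrite coefCM coefXn; case: eqP => [e|]; last by rewrite mulr0.
by case: (hn (((k - (N + N).+1) + ((N + N).+1 - k)))%N).
Qed.


Lemma frob_coef (p : nat) (pp : prime p) (F : {poly 'F_p}) i :
  ~~ (p %| i)%N -> (F ^+ p)`_i = 0.
Proof.
move=> hi.
have ch : p \in [char {poly 'F_p}] by rewrite pchar_poly; exact: pchar_Fp.
rewrite -(pFrobenius_autE ch) -[F]coefK poly_def rmorph_sum coef_sum big1 // => j _.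
rewrite /= pFrobenius_autE exprZn -exprM coefZ coefXn; case: eqP => [e|]; last by rewrite mulr0.
by move: hi; rewrite e dvdn_mull.
Qed.

Lemma key (p : nat) (pp : prime p) r (G : P) M n0 :
  M = (p * n0 + r)%N -> qnr p r -> (p%:Z %| (G ^+ p * theta M)`_M)%Z.
Proof.
move=> hM hq.
rewrite (dvdz_pcharf (pchar_Fp pp)) -(coef_map intr) rmorphM rmorphXn coefM.
apply/eqP; apply: big1 => i _.
case: (boolP (p %| i)%N) => hi; last by rewrite frob_coef // mul0r.
rewrite coef_map theta_coef ?mulr0 // => s hs; apply: hq; exists s; rewrite -hs.
have hiM : (i <= M)%N by rewrite -ltnS.
case/dvdnP: hi hiM => q hq' hiM.
rewrite -(modnMDl q (M - i)) -hq' subnKC // hM.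
by rewrite mulnC modnMDl.
Qed.

Lemma inv_prod M : eqm M (f1inv M * fr 1 M) 1.
Proof.
rewrite /f1inv /fr -big_split /= big_add1 /=.
apply: (@eqm_trans _ _ _ (\prod_(0 <= i < M) (1 : P))); last by rewrite big1_eq; exact: eqm_refl.
apply: eqm_prod => i _.
have -> : (\sum_(j < M.+1) 'X^(i.+1 * j)) * (1 - 'X^(1 * i.+1)) = 1 * (1 - 'X^(i.+1 * M.+1)) :> P.
  have E := subrX1 ('X^(i.+1) : P) M.+1.
  rewrite mul1n mul1r (eq_bigr (fun j : 'I_M.+1 => ('X^(i.+1) : P) ^+ j)); last by move=> j _; rewrite exprM.
  rewrite exprM; apply: (@oppr_inj _); rewrite opprB E; ring.
apply: eqm_1Xn; rewrite mulSn; lia.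
Qed.

Lemma main_aux (p r : nat) :
  prime p -> (5 <= p)%N -> (1 <= r <= p - 1)%N -> qnr p r ->
  forall n : nat, ((p%:Z) %| d (p - 1) (p * n + r)%N)%Z.
Proof.
move=> pp p5 hr hq n0.
set M := (p * n0 + r)%N.
rewrite /d -/M.
set A := fr 2 M; set B := f1inv M; set C := fr 1 M.
have L1 : eqm M (B * C) 1 by exact: inv_prod.
have Gs : eqm M (C ^+ 2) (A * theta M) by exact: gauss.
suff E : eqm M (A ^+ (p - 1) * B ^+ (3 * (p - 1) + 1)) ((A * B ^+ 3) ^+ p * theta M).
  by rewrite (E M (leqnn M)); apply: (key pp _ (erefl M)).
have hp : p = (p - 1).+1 by have := prime_gt0 pp; lia.
set k := (p - 1)%N; rewrite [in X in eqm _ _ X]hp.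
apply: (@eqm_trans _ _ _ (A ^+ k * B ^+ (3 * k + 1) * (B * C) ^+ 2)).
  rewrite -[X in eqm _ X _]mulr1; apply: eqmM; first exact: eqm_refl.
  by apply: eqm_sym; rewrite -(expr1n _ 2); apply: eqmX.
have -> : A ^+ k * B ^+ (3 * k + 1) * (B * C) ^+ 2 = A ^+ k * B ^+ (3 * k + 1) * B ^+ 2 * C ^+ 2 by ring.
apply: (@eqm_trans _ _ _ (A ^+ k * B ^+ (3 * k + 1) * B ^+ 2 * (A * theta M))).
  by apply: eqmM; first exact: eqm_refl.
have -> : (A * B ^+ 3) ^+ k.+1 = A ^+ k * A * (B ^+ (3 * k + 1) * B ^+ 2).
  by rewrite exprMn -exprM -exprD exprSr; congr (_ * _ ^+ _); lia.
have -> : A ^+ k * B ^+ (3 * k + 1) * B ^+ 2 * (A * theta M) = A ^+ k * A * (B ^+ (3 * k + 1) * B ^+ 2) * theta M by ring.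
exact: eqm_refl.
Qed.

End Aux.

Theorem theorem4p3 (p r : nat) :
  prime p -> (5 <= p)%N -> (1 <= r <= p - 1)%N -> qnr p r ->
  forall n : nat, ((p%:Z) %| d (p - 1) (p * n + r))%Z.
Proof. exact: Aux.main_aux. Qed.
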